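(* For every $E\subseteq\mathbb{F}_q^2$ and every nonzero $m\in\mathbb{F}_q^2$, $$\sum_{\theta\in O(\mathbb{F}_q^2)}|\widehat{E}(\theta^{-1}m)|^2\lesssim q^{-3}|E|^{3/2}.$$
   Context: Standing assumptions: $q=p^n$ with $p$ a prime, $p\equiv 3\pmod 4$, $n$ odd. $O(\mathbb{F}_q^2)$ is the group of $2\times2$ matrices $\theta$ over $\mathbb{F}_q$ with $\theta^T\theta=I$. Sets are identified with their indicator functions. Fix a nontrivial additive character $\chi$ of $\mathbb{F}_q$; for $g:\mathbb{F}_q^2\to\mathbb{C}$, $\widehat{g}(m)=q^{-2}\sum_{x\in\mathbb{F}_q^2}\chi(-m\cdot x)g(x)$. $A\lesssim B$ means $A\le cB$ with $c$ independent of $q$, $E$, $m$. *)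

(* Defs.v *)
From HB Require Import structures.
From mathcomp Require Import all_boot all_order all_algebra all_field.
Set Implicit Arguments. Unset Strict Implicit. Unset Printing Implicit Defensive.
Import Order.TTheory GRing.Theory Num.Theory.
Local Open Scope ring_scope.

Definition dotv (F : fieldType) (m x : 'cV[F]_2) : F := \sum_(i < 2) m i 0 * x i 0.

Definition is_add_char (F : finFieldType) (chi : F -> algC) : Prop :=
  forall x y : F, chi (x + y) = chi x * chi y.

Definition nontrivial_char (F : finFieldType) (chi : F -> algC) : Prop :=
  exists x : F, chi x != 1.

Definition orthogonal2 (F : finFieldType) (th : 'M[F]_2) : bool :=
  th^T *m th == 1%:M.

(* \hat{g}(m) = q^{-2} \sum_x chi(-m.x) g(x), with g the indicator of E *)
Definition fourierE (F : finFieldType) (chi : F -> algC) (E : {set 'cV[F]_2})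
  (m : 'cV[F]_2) : algC :=
  (#|F|%:R ^+ 2)^-1 * \sum_(x in E) chi (- dotv m x).

(* Main.v *)
Require Import Defs.
From HB Require Import structures.
From mathcomp Require Import all_boot all_order all_algebra all_field.
From mathcomp Require Import zify ring lra.
Import Order.TTheory GRing.Theory Num.Theory.
Local Open Scope ring_scope.

Lemma q_mod4 (p n : nat) : (p %% 4 = 3)%N -> odd n -> (p ^ n %% 4 = 3)%N.
Proof.
move=> hp hn; rewrite -modnXm hp.
rewrite -(odd_double_half n) hn expnD expn1 -muln2 (mulnC _ 2) expnM.
by rewrite -modnMm -modnXm /= exp1n.
Qed.

Lemma two_neq0F (F : finFieldType) p n : prime p -> (p %% 4 = 3)%N -> #|F| = (p ^ n)%N ->
  (2%:R : F) != 0.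
Proof.
move=> pp hp hF; have ch := card_finPcharP hF pp.
rewrite -(dvdn_pcharf ch); apply/negP => /dvdn_leq => /(_ isT).
have := prime_gt1 pp; case: p pp hp ch hF => [|[|[|p]]] //.
Qed.

Lemma nosqF (F : finFieldType) : (#|F| %% 4 = 3)%N -> (2%:R : F) != 0 ->
  forall x y : F, x ^+ 2 + y ^+ 2 = 0 -> x = 0.
Proof.
move=> hq h2 x y hxy; apply/eqP; apply/negPn/negP => hx.
set z := y / x.
have hz : z ^+ 2 = -1.
  have hy : y ^+ 2 = - x ^+ 2 by apply/eqP; rewrite -addr_eq0 addrC hxy.
  by rewrite /z expr_div_n hy mulNr divff // expf_neq0.
have e : #|F| = (2 * (2 * (#|F| %/ 4) + 1) + 1)%N.
  by rewrite {1}(divn_eq #|F| 4) hq; lia.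
have := expf_card z; rewrite e exprD exprM hz exprD exprM sqrrN !expr1n mul1r !expr1 mulN1r.
move=> /eqP. rewrite eq_sym -subr_eq0 opprK -mulr2n -mulr_natl mulf_eq0 (negPf h2) /= => /eqP z0.
by move: hz; rewrite z0 expr0n /= => /eqP; rewrite eq_sym oppr_eq0 oner_eq0.
Qed.

Lemma dotvE (F : fieldType) (m x : 'cV[F]_2) : dotv m x = m 0 0 * x 0 0 + m 1 0 * x 1 0.
Proof. rewrite /dotv !big_ord_recl big_ord0 addr0; congr (_ + m _ _ * x _ _); exact: val_inj. Qed.

Lemma dotvDl (F : fieldType) (u v x : 'cV[F]_2) : dotv (u + v) x = dotv u x + dotv v x.
Proof. rewrite !dotvE !mxE; ring. Qed.
Lemma dotvNl (F : fieldType) (u x : 'cV[F]_2) : dotv (- u) x = - dotv u x.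
Proof. rewrite !dotvE !mxE; ring. Qed.
Lemma dotvDr (F : fieldType) (u v x : 'cV[F]_2) : dotv x (u + v) = dotv x u + dotv x v.
Proof. rewrite !dotvE !mxE; ring. Qed.
Lemma dotvZr (F : fieldType) (a : F) (u x : 'cV[F]_2) : dotv x (a *: u) = a * dotv x u.
Proof. rewrite !dotvE !mxE; ring. Qed.
Lemma dotvC (F : fieldType) (u x : 'cV[F]_2) : dotv u x = dotv x u.
Proof. rewrite !dotvE; ring. Qed.

Section Chi.
Variables (F : finFieldType) (chi : F -> algC) (p : nat).
Hypotheses (hadd : is_add_char chi) (h0 : chi 0 = 1) (hnt : nontrivial_char chi)
  (pch : p \in [pchar F]).
Hypothesis nosq : forall x y : F, x ^+ 2 + y ^+ 2 = 0 -> x = 0.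

Lemma chi_mulrn a k : chi (a *+ k) = chi a ^+ k.
Proof. by elim: k => [|k IH]; rewrite ?mulr0n ?expr0 // mulrS exprS hadd IH. Qed.

Lemma chiNK a : chi (- a) * chi a = 1.
Proof. by rewrite -hadd addNr. Qed.

Lemma chi_norm a : `|chi a| = 1.
Proof.
have p0 : (0 < p)%N by rewrite prime_gt0 // (pcharf_prime pch).
have : chi a ^+ p = 1 by rewrite -chi_mulrn (mulrn_pchar pch) h0.
move=> /(congr1 (fun z => `|z|)); rewrite normrX normr1 => /eqP.
by rewrite pexpr_eq1 // => /eqP.
Qed.

Lemma chi_conj a : (chi a)^* = chi (- a).
Proof.
have nz : chi a != 0 by apply/negP => /eqP h; move: (chiNK a); rewrite h mulr0 => /eqP; rewrite eq_sym oner_eq0.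
have := invC_norm (chi a); rewrite chi_norm expr1n invr1 mul1r => <-.
by apply: (mulIf nz); rewrite chiNK mulVf.
Qed.

Lemma dot_self0 (v : 'cV[F]_2) : dotv v v = 0 -> v = 0.
Proof.
rewrite dotvE -!expr2 => h.
have h1 := nosq _ _ h; have h2 : v 1 0 = 0 by apply: (nosq _ (v 0 0)); rewrite addrC.
apply/matrixP => i j; rewrite !mxE (ord1 j).
by case: i => [[|[|]]] //= Hi; [rewrite -h1 | rewrite -h2]; congr (v _ _); apply: val_inj.
Qed.

Lemma chi_sum_vec (w : 'cV[F]_2) :
  \sum_(x : 'cV[F]_2) chi (dotv w x) = (#|F|%:R ^+ 2) * (w == 0)%:R.
Proof.
have [->|wn0] := eqVneq w 0.
  have d0 : forall x : 'cV[F]_2, dotv 0 x = 0 by move=> x; rewrite dotvE !mxE; ring.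
  under eq_bigr => x _ do rewrite d0 h0.
  by rewrite sumr_const card_mx /= mulr1 muln1 natrX.
rewrite mulr0; case: hnt => t0 ht0.
have ww : dotv w w != 0 by apply/negP => /eqP /dot_self0 /eqP; rewrite (negPf wn0).
set y := (t0 / dotv w w) *: w.
have hy : dotv w y = t0 by rewrite dotvZr divfK.
set S := \sum_(x : 'cV[F]_2) _.
have : S = chi t0 * S.
  rewrite {1}/S (reindex_inj (addIr y)) /= mulr_sumr; apply: eq_bigr => x _.
  by rewrite dotvDr hadd hy mulrC.
move=> /eqP; rewrite -subr_eq0 -{1}(mul1r S) -mulrBl mulf_eq0 subr_eq0 eq_sym (negPf ht0) /=.
by move/eqP.
Qed.

End Chi.

Section Geo.
Variables (F : finFieldType).
Hypothesis h2 : (2%:R : F) != 0.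
Hypothesis nosq : forall x y : F, x ^+ 2 + y ^+ 2 = 0 -> x = 0.

Lemma dot_self0' (v : 'cV[F]_2) : dotv v v = 0 -> v = 0.
Proof.
rewrite dotvE -!expr2 => h.
have h1 := nosq _ _ h; have h2' : v 1 0 = 0 by apply: (nosq _ (v 0 0)); rewrite addrC.
apply/matrixP => i j; rewrite !mxE (ord1 j).
by case: i => [[|[|]]] //= Hi; [rewrite -h1 | rewrite -h2']; congr (v _ _); apply: val_inj.
Qed.

Lemma cV2_eq (u v : 'cV[F]_2) : u 0 0 = v 0 0 -> u 1 0 = v 1 0 -> u = v.
Proof.
move=> e0 e1; apply/matrixP => i j; rewrite (ord1 j).
by case: i => [[|[|]]] //= Hi; [rewrite (_ : Ordinal Hi = 0) | rewrite (_ : Ordinal Hi = 1)] => //; apply: val_inj.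
Qed.

Lemma sqrt_card (c : F) : (#|[set z : F | z ^+ 2 == c]| <= 2)%N.
Proof.
case: (pickP (fun z : F => z ^+ 2 == c)) => [z0 hz0 | none]; last first.
  by rewrite (_ : [set z | _] = set0) ?cards0 //; apply/setP => z; rewrite !inE none.
apply: (leq_trans (subset_leq_card (_ : _ \subset [set z0; - z0]))); last first.
  by rewrite cards2; case: (_ != _).
apply/subsetP => z; rewrite !inE => hz.
have : (z - z0) * (z + z0) == 0 by rewrite -subr_sqr (eqP hz) (eqP hz0) subrr.
by rewrite mulf_eq0 subr_eq0 addr_eq0.
Qed.

Lemma line_circle (n : 'cV[F]_2) (s k : F) : n != 0 ->
  (#|[set u : 'cV[F]_2 | (dotv u u == s) && (dotv u n == k)]| <= 2)%N.
Proof.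
move=> nn0; set A := [set u | _].
have nn : dotv n n != 0 by apply/negP => /eqP /dot_self0' /eqP; rewrite (negPf nn0).
pose t (u : 'cV[F]_2) := - u 0 0 * n 1 0 + u 1 0 * n 0 0.
have id0 (u : 'cV[F]_2) : u 0 0 * dotv n n = dotv u n * n 0 0 - t u * n 1 0 by rewrite /t !dotvE; ring.
have id1 (u : 'cV[F]_2) : u 1 0 * dotv n n = dotv u n * n 1 0 + t u * n 0 0 by rewrite /t !dotvE; ring.
have inj : {in A &, injective t}.
  move=> u v; rewrite !inE => /andP [_ /eqP hu] /andP [_ /eqP hv] tuv.
  apply: cV2_eq; apply: (mulIf nn); by rewrite ?id0 ?id1 hu hv tuv.
rewrite -(card_in_imset inj); apply: leq_trans (sqrt_card (dotv n n * s - k ^+ 2)).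
apply: subset_leq_card; apply/subsetP => z /imsetP [u]; rewrite !inE => /andP [/eqP hs /eqP hk] ->.
by rewrite -hs -hk /t !dotvE; apply/eqP; ring.
Qed.


Lemma orthoT (th : 'M[F]_2) : orthogonal2 th -> invmx th = th^T /\ th *m th^T = 1%:M.
Proof.
move/eqP => h; have hu := (mulmx1_unit h).2; have h' := mulmx1C h.
split=> //; rewrite -[invmx th]mulmx1 -h' mulmxA mulVmx // mul1mx //.
Qed.

Lemma dotv_mx (a b : 'cV[F]_2) : dotv a b = (a^T *m b) 0 0.
Proof. by rewrite mxE /dotv; apply: eq_bigr => i _; rewrite mxE. Qed.

Lemma xi_norm (m : 'cV[F]_2) th : orthogonal2 th ->
  dotv (invmx th *m m) (invmx th *m m) = dotv m m.
Proof.
move=> /orthoT [-> h']; rewrite !dotv_mx trmx_mul trmxK mulmxA -(mulmxA m^T) h' mulmx1 //.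
Qed.

Lemma col_dot (A : 'M[F]_2) (b : 'cV[F]_2) j : dotv (col j A) b = (A^T *m b) j 0.
Proof. by rewrite /dotv mxE; apply: eq_bigr => i _; rewrite !mxE. Qed.

Lemma M2_eq (A B : 'M[F]_2) : col 0 A = col 0 B -> col 1 A = col 1 B -> A = B.
Proof.
move=> e0 e1; apply/matrixP => i j.
case: j => [[|[|]]] //= Hj.
  by rewrite (_ : Ordinal Hj = 0); [move/matrixP: e0 => /(_ i 0); rewrite !mxE | apply: val_inj].
by rewrite (_ : Ordinal Hj = 1); [move/matrixP: e1 => /(_ i 0); rewrite !mxE | apply: val_inj].
Qed.

Variable m : 'cV[F]_2.
Hypothesis m0 : m != 0.

Lemma fiber_card (x0 : 'cV[F]_2) :
  (#|[set th : 'M[F]_2 | orthogonal2 th && (invmx th *m m == x0)]| <= 4)%N.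
Proof.
pose f (th : 'M[F]_2) := (col 0 th, col 1 th).
have inj : injective f by move=> A B [e0 e1]; apply: M2_eq.
rewrite -(card_imset _ inj).
pose S (j : 'I_2) := [set u : 'cV[F]_2 | (dotv u u == 1) && (dotv u m == x0 j 0)].
apply: (leq_trans (subset_leq_card (_ : _ \subset setX (S 0) (S 1)))).
  apply/subsetP => z /imsetP [th]; rewrite !inE => /andP [o /eqP hx] ->.
  have [hi _] := orthoT _ o; move/eqP: (o) => o'.
  have cm j : (th^T *m col j th) j 0 = (th^T *m th) j j.
    by rewrite !mxE; apply: eq_bigr => i _; rewrite !mxE.
  by rewrite /= !col_dot -!hx hi !cm o' !mxE !eqxx.
by rewrite (@cardsX _ _ (S 0) (S 1)) (leq_mul (line_circle _ _ _ m0) (line_circle _ _ _ m0)).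
Qed.

Lemma pair_card (w : 'cV[F]_2) : w != 0 ->
  leq #|[set ij : 'M[F]_2 * 'M[F]_2 | [&& orthogonal2 ij.1, orthogonal2 ij.2 &
      invmx ij.1 *m m + invmx ij.2 *m m == w]]| 32.
Proof.
move=> w0.
set S := [set u : 'cV[F]_2 | (dotv u u == dotv m m) && (dotv u w == dotv w w / 2%:R)].
have hS : (#|S| <= 2)%N by apply: line_circle.
rewrite -sum1dep_card (partition_big (fun ij => invmx ij.1 *m m) (fun u => u \in S)) /=; last first.
  move=> [A B] /and3P [oA oB /eqP hw] /=; rewrite inE xi_norm // eqxx /=.
  have hB := xi_norm m _ oB; rewrite (_ : invmx B *m m = w - invmx A *m m) in hB; last first.
    by rewrite -hw addrC addKr.
  move: hB; set a := invmx A *m m; rewrite -(xi_norm m _ oA) -/a => hB.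
  have : dotv a w * 2%:R = dotv w w.
    have e : dotv a w * 2%:R - dotv w w = dotv a a - dotv (w - a) (w - a).
      by rewrite !dotvE !mxE; ring.
    by apply/eqP; rewrite -subr_eq0 e hB subrr.
  by move=> <-; rewrite mulfK.
apply: (@leq_trans (\sum_(u in S) 16)%N).
  apply: leq_sum => u uS; rewrite sum1dep_card.
  apply: (leq_trans (subset_leq_card (_ : _ \subset setX
      [set th : 'M[F]_2 | orthogonal2 th && (invmx th *m m == u)]
      [set th : 'M[F]_2 | orthogonal2 th && (invmx th *m m == w - u)]))).
    apply/subsetP => [[A B]]; rewrite !inE /= => /andP [/and3P [oA oB /eqP hw] /eqP hu].
    by rewrite oA oB -hw hu (addrC u) addrK !eqxx.
  by rewrite (@cardsX _ _ [set th : 'M[F]_2 | orthogonal2 th && (invmx th *m m == u)]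
      [set th : 'M[F]_2 | orthogonal2 th && (invmx th *m m == w - u)]) (leq_mul (fiber_card _) (fiber_card _)).
by rewrite sum_nat_const; apply: (leq_trans (leq_mul hS (leqnn 16))).
Qed.

End Geo.

Lemma cs_sum (I : finType) (P : pred I) (f : I -> algC) :
  (forall i, P i -> 0 <= f i) ->
  (\sum_(i | P i) f i) ^+ 2 <= #|[pred i | P i]|%:R * \sum_(i | P i) f i ^+ 2.
Proof.
move=> f0.
have key : (\sum_(i | P i) f i) ^+ 2 *+ 2 <=
    \sum_(i | P i) \sum_(j | P j) (f i ^+ 2 + f j ^+ 2).
  rewrite expr2 mulr_suml -sumrMnl; apply: ler_sum => i Pi.
  rewrite mulr_sumr -sumrMnl; apply: ler_sum => j Pj.
  by apply: (real_leif_mean_square_scaled _ _).1; apply: ger0_real; apply: f0.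
have e : \sum_(i | P i) \sum_(j | P j) (f i ^+ 2 + f j ^+ 2) =
    (#|[pred i | P i]|%:R * \sum_(i | P i) f i ^+ 2) *+ 2.
  have c : forall x : algC, \sum_(j | P j) x = x *+ #|[pred i | P i]|.
    by move=> x; rewrite -sumr_const.
  rewrite mulr2n; under eq_bigr => i _ do rewrite big_split /= c.
  by rewrite big_split /= c sumrMnl mulr_natl.
by rewrite e lerMn2r /= in key.
Qed.

Section Core.
Variables (F : finFieldType) (chi : F -> algC).
Hypotheses (hadd : is_add_char chi) (h0 : chi 0 = 1)
  (hconj : forall a, (chi a)^* = chi (- a))
  (hsum : forall w : 'cV[F]_2, \sum_(x : 'cV[F]_2) chi (dotv w x) = (#|F|%:R ^+ 2) * (w == 0)%:R).

Definition ch (v x : 'cV[F]_2) := chi (- dotv v x).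

Lemma chD u v x : ch (u + v) x = ch u x * ch v x.
Proof. by rewrite /ch dotvDl opprD hadd. Qed.

Lemma chC v x : (ch v x)^* = ch (- v) x.
Proof. by rewrite /ch hconj dotvNl. Qed.

Lemma sum_ch u : \sum_(x : 'cV[F]_2) ch u x = (#|F|%:R ^+ 2) * (u == 0)%:R.
Proof.
rewrite /ch; under eq_bigr => x _ do rewrite -dotvNl.
by rewrite hsum oppr_eq0.
Qed.

Lemma plancherel (G : 'cV[F]_2 -> algC) :
  \sum_(x : 'cV[F]_2) `|\sum_(w : 'cV[F]_2) G w * ch w x| ^+ 2 =
  (#|F|%:R ^+ 2) * \sum_(w : 'cV[F]_2) `|G w| ^+ 2.
Proof.
transitivity (\sum_(w : 'cV[F]_2) \sum_(w' : 'cV[F]_2)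
    G w * (G w')^* * \sum_(x : 'cV[F]_2) ch (w - w') x).
  under eq_bigr => x _ do rewrite normCK rmorph_sum /= mulr_suml.
  rewrite exchange_big; apply: eq_bigr => w _.
  under eq_bigr => x _ do rewrite mulr_sumr.
  rewrite exchange_big; apply: eq_bigr => w' _.
  rewrite mulr_sumr; apply: eq_bigr => x _.
  rewrite rmorphM /= chC chD; ring.
rewrite mulr_sumr; apply: eq_bigr => w _.
rewrite (bigD1 w) //= sum_ch subrr eqxx big1 ?addr0; first by rewrite normCK /= mulr1n mulr1 mulrC.
by move=> w' hw'; rewrite sum_ch subr_eq0 eq_sym (negPf hw') mulr0 mulr0.
Qed.


Lemma sqr_le (x y : algC) : 0 <= x -> x <= y -> x ^+ 2 <= y ^+ 2.
Proof. by move=> x0 xy; apply: lerXn2r; rewrite ?nnegrE //; apply: le_trans xy. Qed.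
Arguments sqr_le {x y}.

Lemma sub_sum (T : finType) (A : pred T) (f : T -> algC) :
  (forall x, 0 <= f x) -> \sum_(x | A x) f x <= \sum_x f x.
Proof.
move=> f0; rewrite [X in _ <= X](bigID A) /=; apply: ler_wpDr => //.
by apply: sumr_ge0.
Qed.

Lemma card_pred_set (T : finType) (Q : pred T) : #|[pred x | Q x]| = #|[set x | Q x]|.
Proof. by rewrite -sum1dep_card -sum1_card. Qed.

Lemma sum_const_pred (T : finType) (Q : pred T) (c : algC) :
  \sum_(j | Q j) c = c * #|[set j | Q j]|%:R.
Proof. by rewrite -card_pred_set mulr_natr -sumr_const; apply: eq_bigl => x; rewrite inE. Qed.

Variables (I : finType) (P : pred I) (xi : I -> 'cV[F]_2).
Hypothesis hM : forall v, (#|[set i | P i && (xi i == v)]| <= 4)%N.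
Hypothesis hN : forall w, w != 0 ->
  leq #|[set ij : I * I | [&& P ij.1, P ij.2 & xi ij.1 + xi ij.2 == w]]| 32.
Variable E : {set 'cV[F]_2}.

Definition ee v := \sum_(x in E) ch v x.
Definition hh i := (ee (xi i))^*.
Definition BB := \sum_(i | P i) `|ee (xi i)| ^+ 2.
Definition TT x := \sum_(i | P i) hh i * ch (xi i) x.
Definition GG w := \sum_(ij | (P ij.1 && P ij.2) && (xi ij.1 + xi ij.2 == w)) hh ij.1 * hh ij.2.

Lemma B_T : BB = \sum_(x in E) TT x.
Proof.
rewrite /BB; under eq_bigr => i _ do rewrite normCK mulrC /ee mulr_sumr.
by rewrite exchange_big.
Qed.

Lemma B_ge0 : 0 <= BB.
Proof. by apply: sumr_ge0 => i _; rewrite exprn_ge0. Qed.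

Lemma BB_h : BB = \sum_(i | P i) `|hh i| ^+ 2.
Proof. by apply: eq_bigr => i _; rewrite norm_conjC. Qed.

Lemma T2 x : TT x ^+ 2 = \sum_w GG w * ch w x.
Proof.
rewrite expr2 /TT mulr_suml.
under eq_bigr => i _ do rewrite mulr_sumr.
rewrite pair_big /= (partition_big (fun ij => xi ij.1 + xi ij.2) predT) //=.
apply: eq_bigr => w _; rewrite /GG mulr_suml; apply: eq_bigr => ij /andP [_ /eqP <-].
rewrite chD; ring.
Qed.

Lemma sumT4 : \sum_x `|TT x| ^+ 4 = (#|F|%:R ^+ 2) * \sum_w `|GG w| ^+ 2.
Proof.
under eq_bigr => x _ do rewrite (_ : 4 = 2 * 2)%N // exprM -normrX T2.
exact: plancherel.
Qed.

Lemma pair_sum0 (f : I -> algC) : (forall i, 0 <= f i) ->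
  \sum_(ij | (P ij.1 && P ij.2) && (xi ij.1 + xi ij.2 == 0)) f ij.1 <= 4 * \sum_(i | P i) f i.
Proof.
move=> f0.
rewrite (eq_bigl (fun ij => P ij.1 && (P ij.2 && (xi ij.1 + xi ij.2 == 0)))); last first.
  by move=> ij; rewrite andbA.
rewrite -(pair_big_dep P (fun i j => P j && (xi i + xi j == 0)) (fun i j => f i)) /=.
rewrite mulr_sumr; apply: ler_sum => i Pi.
rewrite sum_const_pred mulrC; apply: ler_wpM2r => //.
rewrite (_ : [set j | _] = [set j | P j && (xi j == - xi i)]); last first.
  by apply/setP => j; rewrite !inE addrC addr_eq0.
by rewrite (ler_nat _ _ 4) hM.
Qed.

Lemma G0_bound : `|GG 0| <= 4 * BB.
Proof.
have h1 : `|GG 0| *+ 2 <=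
   \sum_(ij | (P ij.1 && P ij.2) && (xi ij.1 + xi ij.2 == 0)) `|hh ij.1| ^+ 2 +
   \sum_(ij | (P ij.1 && P ij.2) && (xi ij.1 + xi ij.2 == 0)) `|hh ij.2| ^+ 2.
  rewrite /GG; apply: le_trans (ler_wMn2r 2 (ler_norm_sum _ _ _)) _.
  rewrite -big_split /= -sumrMnl; apply: ler_sum => ij _; rewrite normrM.
  by apply: (real_leif_mean_square_scaled _ _).1; apply: ger0_real.
have h2 : \sum_(ij | (P ij.1 && P ij.2) && (xi ij.1 + xi ij.2 == 0)) `|hh ij.2| ^+ 2 =
   \sum_(ij | (P ij.1 && P ij.2) && (xi ij.1 + xi ij.2 == 0)) `|hh ij.1| ^+ 2.
  pose sw := fun ij : I * I => (ij.2, ij.1).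
  have swK : involutive sw by case.
  rewrite (reindex_inj (inv_inj swK)) /=.
  by apply: eq_bigl => ij; rewrite (andbC (P ij.2)) addrC.
rewrite h2 BB_h in h1 *.
have h3 := pair_sum0 (fun i => `|hh i| ^+ 2) (fun i => exprn_ge0 2 (normr_ge0 (hh i))).
rewrite -mulr2n in h1.
by have := le_trans h1 (ler_wMn2r 2 h3); rewrite lerMn2r.
Qed.


Lemma Gw_bound w : w != 0 -> `|GG w| ^+ 2 <=
  32 * \sum_(ij | (P ij.1 && P ij.2) && (xi ij.1 + xi ij.2 == w)) `|hh ij.1| ^+ 2 * `|hh ij.2| ^+ 2.
Proof.
move=> w0; rewrite /GG; apply: le_trans (sqr_le (normr_ge0 _) (ler_norm_sum _ _ _)) _.
apply: le_trans (cs_sum _ _ _ (fun ij _ => normr_ge0 _)) _.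
under eq_bigr => ij _ do rewrite normrM exprMn.
apply: ler_wpM2r; first by apply: sumr_ge0 => ij _; rewrite mulr_ge0 ?exprn_ge0.
rewrite card_pred_set (ler_nat _ _ 32).
by rewrite (_ : [set ij | _] = [set ij : I * I | [&& P ij.1, P ij.2 & xi ij.1 + xi ij.2 == w]]) ?hN //;
  apply/setP => ij; rewrite !inE andbA.
Qed.

Lemma sumG : \sum_w `|GG w| ^+ 2 <= 48 * BB ^+ 2.
Proof.
rewrite (bigD1 0) //=.
have hA : `|GG 0| ^+ 2 <= 16 * BB ^+ 2.
  apply: le_trans (sqr_le (normr_ge0 _) G0_bound) _.
  by rewrite exprMn -natrX.
have hB : \sum_(w | w != 0) `|GG w| ^+ 2 <= 32 * BB ^+ 2.
  have hs : \sum_(w | w != 0) `|GG w| ^+ 2 <= \sum_(w | w != 0) 32 *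
      \sum_(ij | (P ij.1 && P ij.2) && (xi ij.1 + xi ij.2 == w)) `|hh ij.1| ^+ 2 * `|hh ij.2| ^+ 2.
    by apply: ler_sum => w hw; exact: Gw_bound.
  apply: le_trans hs _.
  rewrite -mulr_sumr ler_wpM2l //.
  have nn : forall w, 0 <= \sum_(ij | (P ij.1 && P ij.2) && (xi ij.1 + xi ij.2 == w)) `|hh ij.1| ^+ 2 * `|hh ij.2| ^+ 2.
    by move=> w; apply: sumr_ge0 => ij _; rewrite mulr_ge0 ?exprn_ge0.
  apply: le_trans (sub_sum _ (fun w => w != 0) _ nn) _.
  have eP : \sum_(ij | P ij.1 && P ij.2) `|hh ij.1| ^+ 2 * `|hh ij.2| ^+ 2 =
      \sum_w \sum_(ij | (P ij.1 && P ij.2) && (xi ij.1 + xi ij.2 == w)) `|hh ij.1| ^+ 2 * `|hh ij.2| ^+ 2.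
    by rewrite (partition_big (fun ij => xi ij.1 + xi ij.2) predT).
  rewrite -eP BB_h expr2 le_eqVlt; apply/orP; left; apply/eqP.
  rewrite mulr_suml -(pair_big P P (fun i j => `|hh i| ^+ 2 * `|hh j| ^+ 2)) /=.
  by apply: eq_bigr => i _; rewrite mulr_sumr.
apply: le_trans (lerD hA hB) _.
by rewrite -mulrDl -natrD.
Qed.

Lemma core_bound : BB ^+ 2 <= 48 * (#|F|%:R ^+ 2) * #|E|%:R ^+ 3.
Proof.
set a := fun x => `|TT x|.
have a0 x : 0 <= a x by exact: normr_ge0.
have cE : #|[pred x | x \in E]| = #|E|.
  by rewrite card_pred_set; congr (#|_|); apply/setP => x; rewrite inE.
have s1 : BB <= \sum_(x in E) a x.
  by rewrite -(ger0_norm B_ge0) B_T; exact: ler_norm_sum.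
have s2 : (\sum_(x in E) a x) ^+ 2 <= #|E|%:R * \sum_(x in E) a x ^+ 2.
  by rewrite -cE; apply: cs_sum.
have s3 : (\sum_(x in E) a x ^+ 2) ^+ 2 <= #|E|%:R * \sum_x a x ^+ 4.
  apply: le_trans (cs_sum _ _ _ (fun x _ => exprn_ge0 2 (a0 x))) _.
  rewrite cE ler_wpM2l //.
  under eq_bigr => x _ do rewrite -exprM.
  by apply: sub_sum => x; rewrite exprn_ge0.
have s4 : \sum_x a x ^+ 4 <= (#|F|%:R ^+ 2) * (48 * BB ^+ 2).
  by rewrite /a sumT4 ler_wpM2l ?exprn_ge0 // sumG.
have B0 := B_ge0.
have S0 : 0 <= \sum_(x in E) a x by apply: sumr_ge0.
have main : BB ^+ 2 * BB ^+ 2 <= (48 * (#|F|%:R ^+ 2) * #|E|%:R ^+ 3) * BB ^+ 2.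
  rewrite -expr2 -exprM.
  have t1 : BB ^+ (2 * 2) <= ((\sum_(x in E) a x) ^+ 2) ^+ 2.
    by rewrite exprM; apply: sqr_le; rewrite ?exprn_ge0 //; apply: sqr_le.
  apply: le_trans t1 _.
  apply: le_trans (sqr_le (exprn_ge0 _ S0) s2) _.
  rewrite exprMn.
  apply: le_trans (ler_wpM2l (exprn_ge0 _ (ler0n _ _)) s3) _.
  apply: le_trans (ler_wpM2l (exprn_ge0 _ (ler0n _ _)) (ler_wpM2l (ler0n _ _) s4)) _.
  by rewrite le_eqVlt; apply/orP; left; apply/eqP; ring.
have [->|Bn0] := eqVneq (BB ^+ 2) 0.
  by rewrite !mulr_ge0 ?exprn_ge0 ?ler0n.
by rewrite ler_pM2r // in main; rewrite lt_def Bn0 exprn_ge0.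
Qed.
End Core.

Theorem mainTheorem3 :
  exists c : algC, 0 < c /\
  forall (p n : nat) (F : finFieldType) (chi : F -> algC),
    prime p -> (p %% 4 = 3)%N -> odd n -> #|F| = (p ^ n)%N ->
    is_add_char chi -> nontrivial_char chi ->
    forall (E : {set 'cV[F]_2}) (m : 'cV[F]_2), m != 0 ->
      \sum_(th : 'M[F]_2 | orthogonal2 th) `|fourierE chi E (invmx th *m m)| ^+ 2
        <= c * ((#|F|%:R : algC) ^+ 3)^-1 * (#|E|%:R * sqrtC (#|E|%:R)).
Proof.
exists 7; split; first by rewrite ltr0n.
move=> p n F chi pp hp hn hF hadd hnt E m m0.
have h2 := two_neq0F F p n pp hp hF.
have hq : (#|F| %% 4 = 3)%N by rewrite hF; apply: q_mod4.
have nosq := nosqF F hq h2.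
have pch := card_finPcharP hF pp.
have Rge0 : 0 <= 7 * ((#|F|%:R : algC) ^+ 3)^-1 * (#|E|%:R * sqrtC (#|E|%:R)).
  by rewrite !mulr_ge0 ?invr_ge0 ?exprn_ge0 ?ler0n ?sqrtC_ge0 ?ler0n.
have c01 : chi 0 * (chi 0 - 1) = 0.
  by rewrite mulrBr mulr1 -hadd addr0 subrr.
move/eqP: c01; rewrite mulf_eq0 subr_eq0 => /orP [/eqP c0 | /eqP c0].
  rewrite big1 // => th _.
  rewrite /fourierE big1 ?mulr0 ?normr0 ?expr0n //.
  by move=> x _; rewrite -[X in chi X]addr0 hadd c0 mulr0.
have hconj : forall a, (chi a)^* = chi (- a) by move=> a; apply: chi_conj; eauto.
have hsum : forall w : 'cV[F]_2, \sum_(x : 'cV[F]_2) chi (dotv w x) = (#|F|%:R ^+ 2) * (w == 0)%:R.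
  by move=> w; apply: chi_sum_vec; eauto.
have hM : forall v : 'cV[F]_2, (#|[set th : 'M[F]_2 | orthogonal2 th && (invmx th *m m == v)]| <= 4)%N.
  by move=> v; apply: fiber_card.
have hN := pair_card F h2 nosq m m0.
have core := core_bound F chi hadd hconj hsum _ _ _ hM hN E.
set Q : algC := #|F|%:R.
have Q0 : 0 < Q by rewrite ltr0n; apply/card_gt0P; exists 0.
set X : algC := #|E|%:R * sqrtC #|E|%:R.
have X0 : 0 <= X by rewrite mulr_ge0 ?ler0n ?sqrtC_ge0 ?ler0n.
have hB : BB F chi 'M[F]_2 (orthogonal2 (F:=F)) (fun th => invmx th *m m) E <= 7 * Q * X.
  rewrite -(ler_pXn2r (_ : (0 < 2)%N)) // ?nnegrE; last 2 first.
  - exact: B_ge0.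
  - by apply: mulr_ge0 => //; apply: mulr_ge0 => //; apply: ltW.
  apply: le_trans core _.
  rewrite /X !exprMn sqrtCK.
  rewrite (_ : 7 ^+ 2 * Q ^+ 2 * (#|E|%:R ^+ 2 * #|E|%:R) = 49 * Q ^+ 2 * #|E|%:R ^+ 3); last first.
    by rewrite -natrX; ring.
  apply: ler_wpM2r; first by rewrite exprn_ge0 ?ler0n.
  apply: ler_wpM2r; first by rewrite exprn_ge0 ?ltW.
  by rewrite ler_nat.
have e : \sum_(th : 'M[F]_2 | orthogonal2 th) `|fourierE chi E (invmx th *m m)| ^+ 2 =
    ((Q ^+ 2)^-1) ^+ 2 * BB F chi 'M[F]_2 (orthogonal2 (F:=F)) (fun th => invmx th *m m) E.
  rewrite /BB mulr_sumr; apply: eq_bigr => th _.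
  rewrite /fourierE normrM exprMn ger0_norm ?invr_ge0 ?exprn_ge0 ?ltW //.
rewrite e.
rewrite (_ : 7 * (Q ^+ 3)^-1 * X = ((Q ^+ 2)^-1) ^+ 2 * (7 * Q * X)); last first.
  by field; rewrite gt_eqF.
by apply: ler_wpM2l => //; rewrite exprn_ge0 // invr_ge0 exprn_ge0 // ltW.
Qed.
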